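(* The semirings $\mathbb{R}_{\min}$ and $\mathbb{R}_{\max}$ are fully elementary. Their symmetrizations $\tilde{\mathcal{S}}(\mathbb{R}_{\min})$ and $\tilde{\mathcal{S}}(\mathbb{R}_{\max})$ are not fully elementary.
   Context: $\mathbb{R}_{\min}=\mathbb{R}\cup\{+\infty\}$ with addition $\min$ (zero $+\infty$) and multiplication the usual $+$ (unit $0$); $\mathbb{R}_{\max}=\mathbb{R}\cup\{-\infty\}$ with addition $\max$ and multiplication $+$. For a semiring $X$, $\mathcal{S}(X)=X\times X$ with $(a',a'')+(b',b'')=(a'+b',a''+b'')$ and $(a',a'')\cdot(b',b'')=(a'b'+a''b'',a'b''+a''b')$. The relation $\sim$ on $\mathcal{S}(X)$ is: $(a',a'')\sim(b',b'')$ iff $(a',a'')=(b',b'')$, or ($a'\ne a''$, $b'\ne b''$ and $a'+b''=a''+b'$). When $\sim$ is a congruence, the symmetrization is the quotient semiring $\tilde{\mathcal{S}}(X)=\mathcal{S}(X)/\sim$. Polynomials over a unital commutative semiring $X$ in $n$ variables are functions $X^n\to X$ represented by formal expressions $\sum_k a_k\prod_j x_j^{d_{k,j}}$; a polynomial is symmetric if represented by an expression closed (with coefficients) under permuting variables. $e_j$ is the sum of all products of $j$ distinct variables. $X$ is fully elementary if for every $n$ every symmetric polynomial $p$ in $n$ variables equals $r(e_1,\dots,e_n)$ as functions on $X^n$ for some polynomial $r$. *)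

(* Defs.v *)
From Stdlib Require Import Reals ClassicalEpsilon.
From mathcomp Require Import all_boot perm.

Set Implicit Arguments.
Unset Strict Implicit.
Unset Printing Implicit Defensive.

Record srops := SROps {
  car :> Type;
  sadd : car -> car -> car;
  smul : car -> car -> car;
  szero : car;
  sone : car }.

(* R_min = R u {+oo} (None = +oo), addition min, multiplication + *)
Definition rmin_add (a b : option R) : option R :=
  match a, b with
  | None, _ => b
  | _, None => a
  | Some x, Some y => Some (Rmin x y)
  end.
Definition ext_plus (a b : option R) : option R :=
  match a, b with
  | Some x, Some y => Some (Rplus x y)
  | _, _ => None
  end.
Definition Rmin_sr : srops := SROps rmin_add ext_plus None (Some R0).

(* R_max = R u {-oo} (None = -oo), addition max, multiplication + *)
Definition rmax_add (a b : option R) : option R :=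
  match a, b with
  | None, _ => b
  | _, None => a
  | Some x, Some y => Some (Rmax x y)
  end.
Definition Rmax_sr : srops := SROps rmax_add ext_plus None (Some R0).

Definition sym_add (X : srops) (a b : X * X) : X * X :=
  (sadd a.1 b.1, sadd a.2 b.2).
Definition sym_mul (X : srops) (a b : X * X) : X * X :=
  (sadd (smul a.1 b.1) (smul a.2 b.2), sadd (smul a.1 b.2) (smul a.2 b.1)).
Definition S_sr (X : srops) : srops :=
  SROps (@sym_add X) (@sym_mul X) (szero X, szero X) (sone X, szero X).

Definition sim (X : srops) (a b : X * X) : Prop :=
  a = b \/ (a.1 <> a.2 /\ b.1 <> b.2 /\ sadd a.1 b.2 = sadd a.2 b.1).

Definition quot (T : Type) (Rel : T -> T -> Prop) : Type :=
  {C : T -> Prop | exists x, C = Rel x}.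
Definition cls (T : Type) (Rel : T -> T -> Prop) (x : T) : quot Rel :=
  exist _ (Rel x) (ex_intro _ x erefl).
Definition rep (T : Type) (Rel : T -> T -> Prop) (C : quot Rel) : T :=
  proj1_sig (constructive_indefinite_description _ (proj2_sig C)).

(* quotient semiring S(X)/~ (operations computed on representatives;
   this is the quotient semiring when ~ is a congruence) *)
Definition Stilde (X : srops) : srops :=
  @SROps (quot (@sim X))
    (fun C D => cls (@sim X) (sym_add (rep C) (rep D)))
    (fun C D => cls (@sim X) (sym_mul (rep C) (rep D)))
    (cls (@sim X) (szero X, szero X))
    (cls (@sim X) (sone X, szero X)).

(* formal polynomial expressions in n variables: lists of terms
   (a_k, d_k) representing sum_k a_k prod_j x_j^(d_k j) *)
Definition pexpr (X : srops) (n : nat) := seq (X * {ffun 'I_n -> nat}).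

Definition spow (X : srops) (x : X) (k : nat) : X := iter k (smul x) (sone X).

Definition meval (X : srops) (n : nat) (d : {ffun 'I_n -> nat}) (x : 'I_n -> X) : X :=
  foldr (fun i acc => smul (spow (x i) (d i)) acc) (sone X) (enum 'I_n).

Definition peval (X : srops) (n : nat) (p : pexpr X n) (x : 'I_n -> X) : X :=
  foldr (fun t acc => sadd (smul t.1 (meval t.2 x)) acc) (szero X) p.

Definition sym_expr (X : srops) (n : nat) (p : pexpr X n) : Prop :=
  forall (t : X * {ffun 'I_n -> nat}) (s : {perm 'I_n}),
    List.In t p -> List.In (t.1, [ffun i => t.2 (s i)]) p.

Definition esym_expr (X : srops) (n j : nat) : pexpr X n :=
  [seq (sone X, [ffun i => nat_of_bool (i \in A)]) | A : {set 'I_n} <- enum [set A : {set 'I_n} | #|A| == j]].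

Definition fully_elementary (X : srops) : Prop :=
  forall (n : nat) (p : pexpr X n), sym_expr p ->
    exists r : pexpr X n, forall x : 'I_n -> X,
      peval p x = peval r (fun i : 'I_n => peval (esym_expr X n i.+1) x).

(* Main.v *)
From HB Require Import structures.
Require Import Defs.
From Stdlib Require Import Reals ClassicalEpsilon FunctionalExtensionality Lra.
From mathcomp Require Import all_boot perm.
Set Implicit Arguments.
Unset Strict Implicit.
Unset Printing Implicit Defensive.

Lemma In_mem (T : eqType) (x : T) (s : seq T) : List.In x s <-> x \in s.
Proof.
elim: s => [|y s IH] //=; rewrite in_cons; split.
- by case=> [->|/IH ->]; rewrite ?eqxx ?orbT.
- by case/orP=> [/eqP->|/IH]; [left|right].
Qed.

Section Hom.
Variables (X Y : srops) (h : X -> Y).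
Hypotheses (hadd : forall a b, h (sadd a b) = sadd (h a) (h b))
  (hmul : forall a b, h (smul a b) = smul (h a) (h b))
  (h0 : h (szero X) = szero Y) (h1 : h (sone X) = sone Y).

Definition hmap n (p : pexpr X n) : pexpr Y n := [seq (h t.1, t.2) | t <- p].

Lemma h_spow x k : h (spow x k) = spow (h x) k.
Proof. by elim: k => [|k IH] //=; rewrite hmul IH. Qed.

Lemma h_meval n d (x : 'I_n -> X) : h (meval d x) = meval d (fun i => h (x i)).
Proof.
rewrite /meval; elim: (enum 'I_n) => [|i s IH] //=.
by rewrite hmul IH h_spow.
Qed.

Lemma h_peval n (p : pexpr X n) x : h (peval p x) = peval (hmap p) (fun i => h (x i)).
Proof.
rewrite /peval /hmap; elim: p => [|t p IH] //=.
by rewrite hadd hmul IH h_meval.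
Qed.

Lemma hmap_esym n j : hmap (esym_expr X n j) = esym_expr Y n j.
Proof. by rewrite /hmap /esym_expr -map_comp; apply: eq_map => A /=; rewrite h1. Qed.

Lemma hmap_sym n (p : pexpr X n) : sym_expr p -> sym_expr (hmap p).
Proof.
move=> sp t s; rewrite /hmap => /List.in_map_iff [u [<- Hu]].
by apply: (List.in_map (fun t => (h t.1, t.2)) p (u.1, [ffun i => u.2 (s i)])); apply: sp.
Qed.

End Hom.

Definition ltb (a b : option R) : bool :=
  match a, b with
  | Some x, Some y => if Rlt_dec x y then true else false
  | Some _, None => true
  | None, _ => false
  end.
Definition nf (u : option R * option R) : option R * option R :=
  if ltb u.1 u.2 then (u.1, None) else if ltb u.2 u.1 then (None, u.2) else u.

Ltac crush :=
  repeat match goal with x : option R |- _ => destruct x end;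
  unfold nf, ltb, sym_add, sym_mul in *;
  cbn [fst snd sadd smul Rmin_sr car] in *;
  unfold rmin_add, ext_plus, Rmin in *; cbn [fst snd] in *;
  repeat (match goal with
    | |- context [Rle_dec ?a ?b] => destruct (Rle_dec a b)
    | H : context [Rle_dec ?a ?b] |- _ => destruct (Rle_dec a b)
    | |- context [Rlt_dec ?a ?b] => destruct (Rlt_dec a b)
    | H : context [Rlt_dec ?a ?b] |- _ => destruct (Rlt_dec a b)
    end; cbn [is_left fst snd] in * );
  repeat match goal with
    | H : Some _ = Some _ |- _ => injection H; clear H; intro
    | H : (_, _) = (_, _) |- _ => injection H; clear H; intros
    | H : Some ?x <> Some ?y |- _ =>
        let E := fresh in assert (E : x <> y) by congruence; clear H;
        destruct (Rtotal_order x y) as [?|[?|?]]; [|exfalso; exact (E ltac:(assumption))|]; clear E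
    end;
  try discriminate;
  try solve [ congruence | exfalso; lra |
    (repeat match goal with |- (_, _) = (_, _) => f_equal | |- Some _ = Some _ => f_equal end);
    (reflexivity || lra) ].

Lemma sim_nf (a b : option R * option R) : @sim Rmin_sr a b -> nf a = nf b.
Proof.
case=> [->//|]; case: a => [a1 a2]; case: b => [b1 b2] /= [H1 [H2 H3]].
crush.
Qed.

Notation SA := (@sym_add Rmin_sr).
Notation SM := (@sym_mul Rmin_sr).

Lemma nf_addl (u v : option R * option R) : nf (SA (nf u) v) = nf (SA u v).
Proof. case: u => [u1 u2]; case: v => [v1 v2]. crush. Qed.
Lemma nf_addr (u v : option R * option R) : nf (SA u (nf v)) = nf (SA u v).
Proof. case: u => [u1 u2]; case: v => [v1 v2]. crush. Qed.
Lemma nf_mull (u v : option R * option R) : nf (SM (nf u) v) = nf (SM u v).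
Proof. case: u => [u1 u2]; case: v => [v1 v2]. crush. Qed.
Lemma nf_mulr (u v : option R * option R) : nf (SM u (nf v)) = nf (SM u v).
Proof. case: u => [u1 u2]; case: v => [v1 v2]. crush. Qed.

Definition Nsr : srops :=
  @SROps (option R * option R) (fun u v => nf (SA u v)) (fun u v => nf (SM u v))
    (None, None) (Some R0, None).

Definition vP : option R * option R := (Some R0, None).
Definition vM : option R * option R := (None, Some R0).
Definition vB : option R * option R := (Some R0, Some R0).
Definition vZ : option R * option R := (None, None).

Ltac vcomp := rewrite /vP /vM /vB /vZ; cbn [sadd smul szero sone Nsr] in *; crush.

Lemma foldr_perm (T : eqType) (A : Type) (f : T -> A -> A) (z : A) :
  (forall a b c, f a (f b c) = f b (f a c)) ->
  forall s1 s2, perm_eq s1 s2 -> foldr f z s1 = foldr f z s2.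
Proof.
move=> fC.
have rem_eq : forall x s, x \in s -> foldr f z s = f x (foldr f z (rem x s)).
  move=> x; elim=> [|y s IH] //= H.
  case: (eqVneq y x) => [->|nyx] //=.
  move: H; rewrite in_cons => /orP [/eqP exy|/IH ->]; last by rewrite fC.
  by rewrite exy eqxx in nyx.
elim=> [|x s1 IH] s2 P.
  by move: (perm_size P) => /= /esym /size0nil ->.
have xs2 : x \in s2 by rewrite -(perm_mem P) mem_head.
rewrite (rem_eq x s2 xs2) /= (IH (rem x s2)) //.
by rewrite -(perm_cons x) (perm_trans P) // perm_to_rem.
Qed.

Definition posr (w : option R) : Prop := match w with None => True | Some r => Rlt R0 r end.

Lemma pos_min u v : posr (rmin_add u v) <-> posr u /\ posr v.
Proof.
case: u => [u|]; case: v => [v|] //=; try tauto.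
rewrite /Rmin; case: Rle_dec => /= H; split; try lra; case; lra.
Qed.

Lemma pos_foldr (T : Type) (f : T -> option R) s :
  posr (foldr (fun t acc => rmin_add (f t) acc) None s) <-> forall t, List.In t s -> posr (f t).
Proof.
elim: s => [|t s IH] /=; first by split.
rewrite pos_min IH; split.
  by case=> H1 H2 t' [<-|/H2].
by move=> H; split; [apply: H; left|move=> t' Ht'; apply: H; right].
Qed.

Lemma nf_vP uw : nf uw = vP -> posr uw.2.
Proof. case: uw => u w /=; rewrite /vP => H. crush. all: rewrite /posr; lra. Qed.

Lemma nf_vB uw : nf uw = vB -> ~ posr uw.2.
Proof. case: uw => u w /=; rewrite /vB => H. crush. all: rewrite /posr; lra. Qed.

Section HomN.
Variables (X : srops) (g : X * X -> option R * option R).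
Hypotheses (gadd : forall a b, g (sym_add a b) = SA (g a) (g b))
  (gmul : forall a b, g (sym_mul a b) = SM (g a) (g b))
  (g0 : g (szero X, szero X) = vZ) (g1 : g (sone X, szero X) = vP)
  (gsim : forall a b, sim a b -> nf (g a) = nf (g b)).

Definition hN (C : Stilde X) : Nsr := nf (g (rep C)).

Lemma rep_cls z : sim z (rep (cls (@sim X) z)).
Proof.
rewrite /rep /=; case: constructive_indefinite_description => w /= ->.
by left.
Qed.

Lemma hN_cls z : hN (cls (@sim X) z) = nf (g z).
Proof. by rewrite /hN (gsim (rep_cls z)). Qed.

Lemma hN_add C D : hN (@sadd (Stilde X) C D) = @sadd Nsr (hN C) (hN D).
Proof. by rewrite /= hN_cls gadd /hN nf_addl nf_addr. Qed.

Lemma hN_mul C D : hN (@smul (Stilde X) C D) = @smul Nsr (hN C) (hN D).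
Proof. by rewrite /= hN_cls gmul /hN nf_mull nf_mulr. Qed.

Lemma hN_0 : hN (szero (Stilde X)) = szero Nsr.
Proof. by rewrite /= hN_cls g0. Qed.

Lemma hN_1 : hN (sone (Stilde X)) = sone Nsr.
Proof. by rewrite /= hN_cls g1. Qed.

End HomN.

Definition o1 : 'I_2 := lift ord0 ord0.
Definition pt (T : Type) (a b : T) : 'I_2 -> T := fun i => if val i == 0 then a else b.

Lemma enum2 : enum 'I_2 = [:: ord0; o1].
Proof. by rewrite enum_ordSl enum_ordSl enum_ord0. Qed.

Lemma meval2 (X : srops) d (x : 'I_2 -> X) :
  meval d x = smul (spow (x ord0) (d ord0)) (smul (spow (x o1) (d o1)) (sone X)).
Proof. by rewrite /meval enum2. Qed.

Lemma spowS (X : srops) (x : X) k : spow x k.+1 = smul x (spow x k).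
Proof. by []. Qed.

Lemma pt0 (T : Type) (a b : T) : pt a b ord0 = a. Proof. by []. Qed.
Lemma pt1 (T : Type) (a b : T) : pt a b o1 = b. Proof. by []. Qed.

Lemma spowN_P k : @spow Nsr vP k = vP.
Proof. elim: k => [|k IH] //; rewrite spowS IH /=; vcomp. Qed.
Lemma spowN_Z k : @spow Nsr vZ k.+1 = vZ.
Proof. by rewrite /=; case: (spow _ _) => a b; vcomp. Qed.
Lemma spowN_B k : @spow Nsr vB k.+1 = vB.
Proof. elim: k => [|k IH]; first by rewrite /=; vcomp. by rewrite spowS IH /=; vcomp. Qed.
Lemma spowN_M k : @spow Nsr vM k = if odd k then vM else vP.
Proof. elim: k => [|k IH] //; rewrite spowS IH /=; case: (odd k) => /=; vcomp. Qed.

Lemma mon4 (c : {ffun 'I_2 -> nat}) : meval c (@pt Nsr vP vZ) = if c o1 == 0 then vP else vZ.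
Proof.
rewrite meval2 pt0 pt1 spowN_P; case: (c o1) => [|k]; rewrite ?spowN_Z /=; vcomp.
Qed.

Lemma mon7 (c : {ffun 'I_2 -> nat}) :
  meval c (@pt Nsr vB vZ) = if c o1 == 0 then (if c ord0 == 0 then vP else vB) else vZ.
Proof.
rewrite meval2 pt0 pt1; case: (c o1) => [|k1]; case: (c ord0) => [|k0];
  rewrite ?spowN_Z ?spowN_B /=; vcomp.
Qed.

Lemma mon2 (c : {ffun 'I_2 -> nat}) :
  meval c (@pt Nsr vB vM) = if c ord0 == 0 then (if odd (c o1) then vM else vP) else vB.
Proof.
rewrite meval2 pt0 pt1 spowN_M; case: (c ord0) => [|k0]; case: (odd (c o1));
  rewrite ?spowN_B /=; vcomp.
Qed.

Ltac posc := case=> [[a1|] [a2|]]; rewrite /= /Rmin; repeat case: Rle_dec => /= ?; split; try tauto; try lra; try (case; lra); try (move=> ?; lra); try (move=> [? ?]; lra).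

Lemma sm2_P a : posr (SM a vP).2 <-> posr a.2.
Proof. move: a; posc. Qed.
Lemma sm2_Z a : posr (SM a vZ).2.
Proof. by case: a => [[a1|] [a2|]]. Qed.
Lemma sm2_B a : posr (SM a vB).2 <-> posr a.1 /\ posr a.2.
Proof. move: a; posc. Qed.
Lemma sm2_M a : posr (SM a vM).2 <-> posr a.1.
Proof. move: a; posc. Qed.

Lemma peval_raw n (rr : pexpr Nsr n) y :
  peval rr y = nf (foldr (fun t acc => SA (SM t.1 (meval t.2 y)) acc) vZ rr).
Proof.
rewrite /peval; elim: rr => [|t rr IH] //=.
by rewrite IH nf_addr nf_addl.
Qed.

Lemma raw2 (T : Type) (F : T -> option R * option R) s :
  (foldr (fun t acc => SA (F t) acc) vZ s).2 = foldr (fun t acc => rmin_add (F t).2 acc) None s.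
Proof. by elim: s => [|t s IH] //=; rewrite IH. Qed.

Lemma rmin_lc a b c : rmin_add a (rmin_add b c) = rmin_add b (rmin_add a c).
Proof. crush. Qed.

Lemma nadd_lc (a b c : Nsr) : sadd a (sadd b c) = sadd b (sadd a c).
Proof.
rewrite /= nf_addr nf_addr; congr nf.
by case: a => a1 a2; case: b => b1 b2; case: c => c1 c2; rewrite /sym_add /= rmin_lc (rmin_lc a2).
Qed.

Notation nadd := (@sadd Nsr).
Notation nmul := (@smul Nsr).

Definition ind (A : {set 'I_2}) : {ffun 'I_2 -> nat} := [ffun i => nat_of_bool (i \in A)].

Lemma esymN_perm k (l : seq {set 'I_2}) y :
  perm_eq (enum [set A : {set 'I_2} | #|A| == k]) l ->
  peval (esym_expr Nsr 2 k) y = foldr (fun A acc => nadd (nmul vP (meval (ind A) y)) acc) vZ l.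
Proof.
move=> Hp; rewrite /peval /esym_expr foldr_map.
by apply: foldr_perm => // A B c; rewrite nadd_lc.
Qed.

Lemma card1_2 (A : {set 'I_2}) : (#|A| == 1) = (A \in [:: [set ord0]; [set o1]]).
Proof.
apply/idP/idP.
  case/cards1P => a ->; case: a => [[|[|m]] Hm] //.
    by rewrite (_ : Ordinal Hm = ord0) ?mem_head //; apply: val_inj.
  by rewrite (_ : Ordinal Hm = o1) ?inE ?eqxx ?orbT //; apply: val_inj.
by rewrite !inE => /orP [] /eqP ->; rewrite cards1.
Qed.

Lemma card2_2 (A : {set 'I_2}) : (#|A| == 2) = (A \in [:: [set: 'I_2]]).
Proof.
rewrite inE; apply/idP/idP.
  by move=> /eqP HA; rewrite eqEcard subsetT cardsT card_ord HA.
by move=> /eqP ->; rewrite cardsT card_ord.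
Qed.

Lemma perm1 : perm_eq (enum [set A : {set 'I_2} | #|A| == 1]) [:: [set ord0]; [set o1]].
Proof.
apply: uniq_perm; first exact: enum_uniq.
  rewrite /= inE andbT; apply/negP => /eqP /set1_inj H.
  by move: (congr1 val H).
by move=> A; rewrite mem_enum inE card1_2.
Qed.

Lemma perm2 : perm_eq (enum [set A : {set 'I_2} | #|A| == 2]) [:: [set: 'I_2]].
Proof.
apply: uniq_perm; first exact: enum_uniq.
  by [].
by move=> A; rewrite mem_enum inE card2_2.
Qed.

Lemma e1N a b : peval (esym_expr Nsr 2 1) (@pt Nsr a b) =
  nadd (nmul vP (meval (ind [set ord0]) (@pt Nsr a b)))
   (nadd (nmul vP (meval (ind [set o1]) (@pt Nsr a b))) vZ).
Proof. by rewrite (esymN_perm _ perm1). Qed.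

Lemma e2N a b : peval (esym_expr Nsr 2 2) (@pt Nsr a b) =
  nadd (nmul vP (meval (ind [set: 'I_2]) (@pt Nsr a b))) vZ.
Proof. by rewrite (esymN_perm _ perm2). Qed.

Lemma ind0 : ind [set ord0] ord0 = 1. Proof. by rewrite ffunE inE. Qed.
Lemma ind0' : ind [set ord0] o1 = 0. Proof. by rewrite ffunE inE. Qed.
Lemma ind1 : ind [set o1] ord0 = 0. Proof. by rewrite ffunE inE. Qed.
Lemma ind1' : ind [set o1] o1 = 1. Proof. by rewrite ffunE inE. Qed.
Lemma indT i : ind [set: 'I_2] i = 1. Proof. by rewrite ffunE inE. Qed.

Lemma spow0 (X : srops) (x : X) : spow x 0 = sone X. Proof. by []. Qed.
Lemma spow1 (X : srops) (x : X) : spow x 1 = smul x (sone X). Proof. by []. Qed.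
Lemma spow2 (X : srops) (x : X) : spow x 2 = smul x (smul x (sone X)). Proof. by []. Qed.
Lemma oneN : sone Nsr = vP. Proof. by []. Qed.
Lemma nfP : nf vP = vP. Proof. vcomp. Qed.
Lemma nfB : nf vB = vB. Proof. vcomp. Qed.
Lemma nfM : nf vM = vM. Proof. vcomp. Qed.
Lemma nfZ : nf vZ = vZ. Proof. vcomp. Qed.
Lemma nmulP u : nmul vP u = nf u. Proof. case: u => a b; vcomp. Qed.
Lemma nmulP' u : nmul u vP = nf u. Proof. case: u => a b; vcomp. Qed.
Lemma nmulZ u : nmul vZ u = vZ. Proof. case: u => a b; vcomp. Qed.
Lemma nmulZ' u : nmul u vZ = vZ. Proof. case: u => a b; vcomp. Qed.
Lemma naddZ u : nadd u vZ = nf u. Proof. case: u => a b; vcomp. Qed.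
Lemma naddZ' u : nadd vZ u = nf u. Proof. case: u => a b; vcomp. Qed.
Lemma nmulBB : nmul vB vB = vB. Proof. vcomp. Qed.
Lemma nmulBM : nmul vB vM = vB. Proof. vcomp. Qed.
Lemma nmulMB : nmul vM vB = vB. Proof. vcomp. Qed.
Lemma nmulMM : nmul vM vM = vP. Proof. vcomp. Qed.
Lemma naddPP : nadd vP vP = vP. Proof. vcomp. Qed.
Lemma naddPM : nadd vP vM = vB. Proof. vcomp. Qed.
Lemma naddBB : nadd vB vB = vB. Proof. vcomp. Qed.

Ltac nsimp := rewrite ?spow0 ?spow1 ?spow2 ?oneN;
  repeat (rewrite ?nmulP ?nmulP' ?nmulZ ?nmulZ' ?naddZ ?naddZ' ?nfP ?nfB ?nfM ?nfZ
     ?nmulBB ?nmulBM ?nmulMB ?nmulMM ?naddPP ?naddPM ?naddBB).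

Lemma e_4 : peval (esym_expr Nsr 2 1) (@pt Nsr vP vZ) = vP /\ peval (esym_expr Nsr 2 2) (@pt Nsr vP vZ) = vZ.
Proof. rewrite e1N e2N !meval2 !pt0 !pt1 ind0 ind0' ind1 ind1' !indT; nsimp; by []. Qed.
Lemma e_7 : peval (esym_expr Nsr 2 1) (@pt Nsr vB vZ) = vB /\ peval (esym_expr Nsr 2 2) (@pt Nsr vB vZ) = vZ.
Proof. rewrite e1N e2N !meval2 !pt0 !pt1 ind0 ind0' ind1 ind1' !indT; nsimp; by []. Qed.
Lemma e_2 : peval (esym_expr Nsr 2 1) (@pt Nsr vP vM) = vB /\ peval (esym_expr Nsr 2 2) (@pt Nsr vP vM) = vM.
Proof. rewrite e1N e2N !meval2 !pt0 !pt1 ind0 ind0' ind1 ind1' !indT; nsimp; by []. Qed.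

Definition dd (j : 'I_2) : {ffun 'I_2 -> nat} := [ffun i => if i == j then 2 else 0].
Lemma dd00 : dd ord0 ord0 = 2. Proof. by rewrite ffunE. Qed.
Lemma dd01 : dd ord0 o1 = 0. Proof. by rewrite ffunE. Qed.
Lemma dd10 : dd o1 ord0 = 0. Proof. by rewrite ffunE. Qed.
Lemma dd11 : dd o1 o1 = 2. Proof. by rewrite ffunE. Qed.

Definition pN : pexpr Nsr 2 := [:: (vP, dd ord0); (vP, dd o1)].
Lemma peval_cons (X : srops) n (a : X) (d : {ffun 'I_n -> nat}) s x :
  peval ((a, d) :: s) x = sadd (smul a (meval d x)) (peval s x).
Proof. by []. Qed.
Lemma peval_nil (X : srops) n x : peval (Nil (X * {ffun 'I_n -> nat})) x = szero X.
Proof. by []. Qed.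
Lemma zeroN : szero Nsr = vZ. Proof. by []. Qed.

Ltac pcomp := rewrite /pN !peval_cons peval_nil zeroN !meval2 !pt0 !pt1 dd00 dd01 dd10 dd11; nsimp.

Lemma p_4 : peval pN (@pt Nsr vP vZ) = vP.
Proof. pcomp; by []. Qed.
Lemma p_7 : peval pN (@pt Nsr vB vZ) = vB.
Proof. pcomp; by []. Qed.
Lemma p_2 : peval pN (@pt Nsr vP vM) = vP.
Proof. pcomp; by []. Qed.

Lemma pt_case (i : 'I_2) : i = ord0 \/ i = o1.
Proof. case: i => [[|[|m]] Hm]; [left|right|by []]; exact: val_inj. Qed.



Lemma not_fe (Y : srops) (h : Y -> Nsr)
  (hadd : forall a b, h (sadd a b) = sadd (h a) (h b))
  (hmul : forall a b, h (smul a b) = smul (h a) (h b))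
  (h0 : h (szero Y) = szero Nsr) (h1 : h (sone Y) = sone Nsr)
  (yM yB : Y) (hM : h yM = vM) (hB : h yB = vB) : ~ fully_elementary Y.
Proof.
move=> FE.
pose p : pexpr Y 2 := [seq (sone Y, dd j) | j <- enum 'I_2].
have sp : sym_expr p.
  move=> t s /List.in_map_iff [j [<- _]] /=.
  have -> : [ffun i => dd j (s i)] = dd (s^-1 j)%g.
    apply/ffunP => i; rewrite !ffunE.
    by rewrite -{1}(permKV s j) (inj_eq (@perm_inj _ s)).
  apply: (List.in_map (fun j => (sone Y, dd j))).
  by apply/In_mem; rewrite mem_enum.
case: (FE 2 p sp) => r Hr.
have hp : hmap h p = pN by rewrite /hmap -map_comp enum2 /= h1.
have key : forall a b : Y, peval pN (@pt Nsr (h a) (h b)) =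
   peval (hmap h r) (@pt Nsr (peval (esym_expr Nsr 2 1) (@pt Nsr (h a) (h b)))
                             (peval (esym_expr Nsr 2 2) (@pt Nsr (h a) (h b)))).
  move=> a b; move: (congr1 h (Hr (pt a b))).
  rewrite !h_peval // hp.
  have E1 : (fun i => h (pt a b i)) = @pt Nsr (h a) (h b).
    by apply: functional_extensionality => i; case: (pt_case i) => ->.
  rewrite E1; move=> ->; congr peval.
  apply: functional_extensionality => i.
  rewrite h_peval // hmap_esym // E1.
  by case: (pt_case i) => ->.
set rr := hmap h r in key.
have K4 := key (sone Y) (szero Y); rewrite h0 h1 -/vP -/vZ in K4.
have K7 := key yB (szero Y); rewrite h0 hB -/vZ in K7.
have K2 := key (sone Y) yM; rewrite hM h1 -/vP in K2.
case: e_4 => [E41 E42]; case: e_7 => [E71 E72]; case: e_2 => [E21 E22].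
rewrite p_4 E41 E42 peval_raw in K4.
rewrite p_7 E71 E72 peval_raw in K7.
rewrite p_2 E21 E22 peval_raw in K2.
move: (nf_vP (esym K4)) (nf_vB (esym K7)) (nf_vP (esym K2)).
rewrite !raw2 !pos_foldr => P4 P7 P2; apply: P7 => t Ht.
move: (P4 t Ht) (P2 t Ht); rewrite mon4 mon7 mon2.
case: (t.2 o1 == 0); last by move=> *; apply: sm2_Z.
case: (t.2 ord0 == 0).
  by rewrite sm2_P.
by rewrite sm2_P sm2_B => ? [].
Qed.

Lemma not_fe_min : ~ fully_elementary (Stilde Rmin_sr).
Proof.
pose g := fun u : Rmin_sr * Rmin_sr => (u : option R * option R).
have gadd : forall a b, g (sym_add a b) = SA (g a) (g b) by [].
have gmul : forall a b, g (sym_mul a b) = SM (g a) (g b) by [].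
have g0 : g (szero Rmin_sr, szero Rmin_sr) = vZ by [].
have g1 : g (sone Rmin_sr, szero Rmin_sr) = vP by [].
have gsim : forall a b, sim a b -> nf (g a) = nf (g b) by move=> a b; apply: sim_nf.
apply: (@not_fe _ (hN g) (hN_add gadd gsim) (hN_mul gmul gsim) (hN_0 g0 gsim) (hN_1 g1 gsim)
  (cls (@sim Rmin_sr) (None, Some R0)) (cls (@sim Rmin_sr) (Some R0, Some R0))).
  by rewrite hN_cls // nfM.
by rewrite hN_cls // nfB.
Qed.

Definition negopt (x : option R) : option R := match x with Some r => Some (Ropp r) | None => None end.
Definition negp (u : option R * option R) : option R * option R := (negopt u.1, negopt u.2).

Lemma neg_max x y : negopt (rmax_add x y) = rmin_add (negopt x) (negopt y).
Proof.
case: x => [x|]; case: y => [y|] //=; rewrite /Rmax /Rmin.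
by case: Rle_dec => ?; case: Rle_dec => ? //; congr Some; lra.
Qed.
Lemma neg_plus x y : negopt (ext_plus x y) = ext_plus (negopt x) (negopt y).
Proof. by case: x => [x|]; case: y => [y|] //=; congr Some; lra. Qed.
Lemma negopt_inj : injective negopt.
Proof. by case=> [x|]; case=> [y|] //= [] H; congr Some; lra. Qed.

Lemma not_fe_max : ~ fully_elementary (Stilde Rmax_sr).
Proof.
pose g := fun u : Rmax_sr * Rmax_sr => negp u.
have gadd : forall a b, g (sym_add a b) = SA (g a) (g b).
  by move=> [a1 a2] [b1 b2]; rewrite /g /negp /sym_add /= !neg_max.
have gmul : forall a b, g (sym_mul a b) = SM (g a) (g b).
  by move=> [a1 a2] [b1 b2]; rewrite /g /negp /sym_mul /= !neg_max !neg_plus.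
have g0 : g (szero Rmax_sr, szero Rmax_sr) = vZ by [].
have g1 : g (sone Rmax_sr, szero Rmax_sr) = vP by rewrite /g /negp /= Ropp_0.
have gsim : forall a b, sim a b -> nf (g a) = nf (g b).
  move=> [a1 a2] [b1 b2] [-> //|[H1 [H2 H3]]]; apply: sim_nf; right.
  rewrite /g /negp /=; split; first by move/negopt_inj.
  split; first by move/negopt_inj.
  by rewrite -!neg_max; congr negopt; exact: H3.
apply: (@not_fe _ (hN g) (hN_add gadd gsim) (hN_mul gmul gsim) (hN_0 g0 gsim) (hN_1 g1 gsim)
  (cls (@sim Rmax_sr) (None, Some R0)) (cls (@sim Rmax_sr) (Some R0, Some R0))).
  by rewrite hN_cls // /g /negp /= Ropp_0 nfM.
by rewrite hN_cls // /g /negp /= Ropp_0 nfB.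
Qed.

Lemma ext_plusA : associative ext_plus.
Proof. by case=> [a|]; case=> [b|]; case=> [c|] //=; rewrite Rplus_assoc. Qed.
Lemma ext_plusC : commutative ext_plus.
Proof. by case=> [a|]; case=> [b|] //=; rewrite Rplus_comm. Qed.
Lemma ext_plus0 : left_id (Some R0) ext_plus.
Proof. by case=> [a|] //=; rewrite Rplus_0_l. Qed.
HB.instance Definition _ := Monoid.isComLaw.Build (option R) (Some R0) ext_plus ext_plusA ext_plusC ext_plus0.

Ltac rdec := repeat (case: Rle_dec => /= ?); try done; exfalso; lra.

Definition ole (a b : option R) : bool :=
  match a, b with
  | _, None => true
  | None, Some _ => false
  | Some x, Some y => if Rle_dec x y then true else false
  end.

Lemma le_refl a : ole a a.
Proof. by case: a => [a|] //=; rdec. Qed.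
Lemma le_trans a b c : ole a b -> ole b c -> ole a c.
Proof.
case: a => [a|]; case: b => [b|]; case: c => [c|] //=.
rdec.
Qed.
Lemma le_total a b : ole a b || ole b a.
Proof. by case: a => [a|]; case: b => [b|] //=; rdec. Qed.
Lemma le_anti a b : ole a b -> ole b a -> a = b.
Proof.
case: a => [a|]; case: b => [b|] //=.
by case: (Rle_dec a b) => H1; case: (Rle_dec b a) => H2 //= _ _; congr Some; lra.
Qed.
Lemma le_plus a b c d : ole a b -> ole c d -> ole (ext_plus a c) (ext_plus b d).
Proof.
case: a => [a|]; case: b => [b|]; case: c => [c|]; case: d => [d|] //=.
rdec.
Qed.
Lemma min_le_l a b : ole (rmin_add a b) a.
Proof.
case: a => [a|]; case: b => [b|] //=; rewrite /Rmin.
all: try (case: (Rle_dec a b) => ?); rdec.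
Qed.
Lemma min_le_r a b : ole (rmin_add a b) b.
Proof.
case: a => [a|]; case: b => [b|] //=; rewrite /Rmin.
all: try (case: (Rle_dec a b) => ?); rdec.
Qed.
Lemma le_min c a b : ole c a -> ole c b -> ole c (rmin_add a b).
Proof.
case: a => [a|]; case: b => [b|]; case: c => [c|] //=; rewrite /Rmin.
all: try (case: (Rle_dec a b) => ?); rdec.
Qed.

Lemma foldr_min_le (T : Type) (F : T -> option R) s t :
  List.In t s -> ole (foldr (fun t acc => rmin_add (F t) acc) None s) (F t).
Proof.
elim: s => [|u s IH] //= [->|/IH H]; first exact: min_le_l.
exact: le_trans (min_le_r _ _) H.
Qed.

Lemma le_foldr_min (T : Type) (F : T -> option R) s c :
  (forall t, List.In t s -> ole c (F t)) -> ole c (foldr (fun t acc => rmin_add (F t) acc) None s).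
Proof.
elim: s => [|u s IH] /= H; first by case: c {H}.
by apply: le_min; [apply: H; left|apply: IH => t Ht; apply: H; right].
Qed.

Notation "\psum_ ( i 'in' A ) F" := (\big[ext_plus/Some R0]_(i in A) F) (at level 41, F at level 41, i, A at level 50).

Lemma le_big (I : finType) (P : pred I) (F G : I -> option R) :
  (forall i, P i -> ole (F i) (G i)) ->
  ole (\big[ext_plus/Some R0]_(i | P i) F i) (\big[ext_plus/Some R0]_(i | P i) G i).
Proof.
move=> H; apply: (big_ind2 (fun a b => ole a b)) => //; first exact: le_refl.
by move=> *; apply: le_plus.
Qed.

Lemma le_bigmin (I : finType) (P : pred I) (F : I -> option R) c :
  (forall i, P i -> ole c (F i)) -> ole c (\big[rmin_add/None]_(i | P i) F i).
Proof.
move=> H; apply: (big_ind (fun a => ole c a)) => //; first by case: c {H}.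
by move=> *; apply: le_min.
Qed.

Lemma rmin_addA : associative rmin_add.
Proof.
move=> a b c; apply: le_anti.
  apply: le_min; last exact: le_trans (min_le_r _ _) (min_le_r _ _).
  apply: le_min; first exact: min_le_l.
  exact: le_trans (min_le_r _ _) (min_le_l _ _).
apply: le_min; first exact: le_trans (min_le_l _ _) (min_le_l _ _).
apply: le_min; last exact: min_le_r.
exact: le_trans (min_le_l _ _) (min_le_r _ _).
Qed.
Lemma rmin_addC : commutative rmin_add.
Proof. by move=> a b; apply: le_anti; apply: le_min; [exact: min_le_r|exact: min_le_l|exact: min_le_r|exact: min_le_l]. Qed.
Lemma rmin_add0 : left_id None rmin_add.
Proof. by case. Qed.
HB.instance Definition _ := Monoid.isComLaw.Build (option R) None rmin_add rmin_addA rmin_addC rmin_add0.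

Lemma bigmin_le (I : finType) (P : pred I) (F : I -> option R) i :
  P i -> ole (\big[rmin_add/None]_(j | P j) F j) (F i).
Proof. by move=> Pi; rewrite (bigD1 i) //=; apply: min_le_l. Qed.

Lemma foldr_big (I : Type) (F : I -> option R) s :
  foldr (fun i acc => ext_plus (F i) acc) (Some R0) s = \big[ext_plus/Some R0]_(i <- s) F i.
Proof. by elim: s => [|i s IH]; rewrite ?big_nil ?big_cons /= ?IH. Qed.

Lemma meval_big n (d : {ffun 'I_n -> nat}) (x : 'I_n -> option R) :
  @meval Rmin_sr n d x = \big[ext_plus/Some R0]_(i < n) @spow Rmin_sr (x i) (d i).
Proof. by rewrite /meval foldr_big big_enum. Qed.

Lemma spow_big (y : option R) k : @spow Rmin_sr y k = \big[ext_plus/Some R0]_(t < k) y.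
Proof. by rewrite big_const_ord. Qed.

Lemma layer n (d : {ffun 'I_n -> nat}) (x : 'I_n -> option R) M :
  (forall j, d j <= M) ->
  @meval Rmin_sr n d x = \big[ext_plus/Some R0]_(t < M) \big[ext_plus/Some R0]_(j | t < d j) x j.
Proof.
move=> dM; rewrite meval_big.
rewrite (eq_bigr (fun j => \big[ext_plus/Some R0]_(t < M | t < d j) x j)); last first.
  move=> j _; rewrite -(big_mkord (fun t => t < d j) (fun _ => x j)) -(big_nat_widen _ _ _ predT) //.
  by rewrite big_const_nat subn0.
by rewrite (exchange_big_dep predT).
Qed.

Definition Sset n (d : {ffun 'I_n -> nat}) t : {set 'I_n} := [set j | t < d j].
Definition Mb n (d : {ffun 'I_n -> nat}) := \sum_(j < n) d j.
Definition cc n (d : {ffun 'I_n -> nat}) : {ffun 'I_n -> nat} :=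
  [ffun k : 'I_n => #|[set t : 'I_(Mb d) | #|Sset d t| == k.+1]|].
Definition ex n (x : 'I_n -> option R) : 'I_n -> option R :=
  fun i => @peval Rmin_sr n (esym_expr Rmin_sr n i.+1) x.
Definition indn n (A : {set 'I_n}) : {ffun 'I_n -> nat} := [ffun i => nat_of_bool (i \in A)].

Lemma Mb_ge n (d : {ffun 'I_n -> nat}) j : d j <= Mb d.
Proof. by rewrite /Mb (bigD1 j) //= leq_addr. Qed.

Lemma mevalc n (d : {ffun 'I_n -> nat}) x :
  @meval Rmin_sr n (cc d) (ex x) =
  \big[ext_plus/Some R0]_(t < Mb d) \big[ext_plus/Some R0]_(k : 'I_n | #|Sset d t| == k.+1) ex x k.
Proof.
rewrite meval_big.
rewrite (eq_bigr (fun k : 'I_n => \big[ext_plus/Some R0]_(t < Mb d | #|Sset d t| == k.+1) ex x k)).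
  by rewrite (exchange_big_dep predT).
move=> k _; rewrite ffunE.
rewrite (_ : @spow Rmin_sr (ex x k) _ = iter #|[set t : 'I_(Mb d) | #|Sset d t| == k.+1]| (ext_plus (ex x k)) (Some R0)) // -big_const.
by apply: eq_bigl => t; rewrite inE.
Qed.

Lemma foldr_ext (A B : Type) (f g : A -> B -> B) z s :
  (forall a b, f a b = g a b) -> foldr f z s = foldr g z s.
Proof. by move=> H; elim: s => [|a s IH] //=; rewrite IH H. Qed.

Lemma esym_foldr n k (x : 'I_n -> option R) :
  @peval Rmin_sr n (esym_expr Rmin_sr n k) x =
  foldr (fun A acc => rmin_add (@meval Rmin_sr n (indn A) x) acc) None
    (enum [set A : {set 'I_n} | #|A| == k]).
Proof.
rewrite /peval /esym_expr foldr_map.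
apply: foldr_ext => A acc; cbn [sadd smul sone Rmin_sr fst snd].
by rewrite ext_plus0.
Qed.

Lemma meval_ind n (A : {set 'I_n}) x :
  @meval Rmin_sr n (indn A) x = \big[ext_plus/Some R0]_(j in A) x j.
Proof.
rewrite meval_big [RHS]big_mkcond; apply: eq_bigr => j _.
by rewrite ffunE; case: (j \in A) => //=; rewrite Monoid.mulm1.
Qed.

Lemma eq_le a b : a = b -> ole a b.
Proof. by move=> ->; apply: le_refl. Qed.

Lemma card_lt n (S : {set 'I_n}) m : #|S| = m.+1 -> m < n.
Proof. by move=> HS; move: (max_card S); rewrite card_ord HS. Qed.

Lemma inner_pred1 n (x : 'I_n -> option R) (S : {set 'I_n}) m (HS : #|S| = m.+1) :
  \big[ext_plus/Some R0]_(k : 'I_n | #|S| == k.+1) ex x k = ex x (Ordinal (card_lt HS)).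
Proof.
rewrite (big_pred1 (Ordinal (card_lt HS))) // => k /=.
apply/eqP/eqP => [H|->] //=; apply: val_inj => /=.
by move: H; rewrite HS => -[].
Qed.

Lemma inner_pred0 n (x : 'I_n -> option R) (S : {set 'I_n}) :
  #|S| = 0 -> \big[ext_plus/Some R0]_(k : 'I_n | #|S| == k.+1) ex x k = Some R0.
Proof. by move=> HS; rewrite big_pred0 // => k; rewrite HS. Qed.

Lemma termB n (d : {ffun 'I_n -> nat}) x t :
  ole (\big[ext_plus/Some R0]_(k : 'I_n | #|Sset d t| == k.+1) ex x k)
     (\big[ext_plus/Some R0]_(j | t < d j) x j).
Proof.
have := erefl #|Sset d t|; case: {2}#|Sset d t| => [|m] HS.
  rewrite inner_pred0 // big_pred0 ?le_refl // => j.
  apply/negP => Hj; have Hj' : j \in Sset d t by rewrite inE.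
  by move: (card0_eq HS j); rewrite Hj'.
rewrite (inner_pred1 x HS) /ex esym_foldr.
apply: le_trans (foldr_min_le _ (t := Sset d t) _) _.
  by apply/In_mem; rewrite mem_enum inE HS.
by rewrite meval_ind; apply: eq_le; apply: eq_bigl => j; rewrite inE.
Qed.

Lemma lower n (x : 'I_n -> option R) (S A : {set 'I_n}) :
  (forall j j', j \in S -> j' \notin S -> ole (x j) (x j')) -> #|A| = #|S| ->
  ole (\big[ext_plus/Some R0]_(j in S) x j) (\big[ext_plus/Some R0]_(j in A) x j).
Proof.
move=> HS HA.
rewrite (@big_setID _ _ _ _ S A) [X in ole _ X](@big_setID _ _ _ _ A S) setIC.
apply: le_plus; first exact: le_refl.
pose v := \big[rmin_add/None]_(j in A :\: S) x j.
have cardD : #|S :\: A| = #|A :\: S|.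
  move: HA; rewrite -(cardsID A S) -(cardsID S A) setIC.
  by move/eqP; rewrite eqn_add2l => /eqP.
apply: (@le_trans _ (\big[ext_plus/Some R0]_(j in S :\: A) v)).
  apply: le_big => j Hj; apply: le_bigmin => j' Hj'.
  move: Hj Hj'; rewrite !inE => /andP [_ Hj] /andP [Hj' _].
  by apply: HS.
rewrite !big_const cardD.
apply: (@le_trans _ (\big[ext_plus/Some R0]_(j in A :\: S) v)).
  by rewrite big_const; apply: le_refl.
by apply: le_big => j Hj; apply: bigmin_le.
Qed.

Lemma termC n (d : {ffun 'I_n -> nat}) x (s : {perm 'I_n}) t :
  (forall i j, ~~ ole (x j) (x i) -> d (s j) <= d (s i)) ->
  ole (\big[ext_plus/Some R0]_(j | t < d (s j)) x j)
     (\big[ext_plus/Some R0]_(k : 'I_n | #|Sset d t| == k.+1) ex x k).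
Proof.
move=> Hop.
pose S' := [set j | t < d (s j)].
have cS : #|S'| = #|Sset d t|.
  have -> : S' = s @^-1: Sset d t by apply/setP => j; rewrite !inE.
  by rewrite card_preimset //; apply: perm_inj.
have := erefl #|Sset d t|; case: {2}#|Sset d t| => [|m] HS.
  rewrite inner_pred0 // big_pred0 ?le_refl // => j.
  apply/negP => Hj; have Hj' : j \in S' by rewrite inE.
  by rewrite HS in cS; move: (card0_eq cS j); rewrite Hj'.
rewrite (inner_pred1 x HS) /ex esym_foldr.
apply: le_foldr_min => A /In_mem; rewrite mem_enum inE => /eqP HA.
rewrite meval_ind (eq_bigl (fun j => j \in S')); last by move=> j; rewrite inE.
apply: lower; last by rewrite HA cS HS.
move=> j j' Hj Hj'; case E: (ole (x j) (x j')) => //.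
move: (Hop j' j (negbT E)) => Hd.
move: Hj Hj'; rewrite !inE => Hj /negP; case.
exact: leq_trans Hj Hd.
Qed.

Lemma opp_perm n (x : 'I_n -> option R) (d : 'I_n -> nat) :
  exists s : {perm 'I_n}, forall i j, ~~ ole (x j) (x i) -> d (s j) <= d (s i).
Proof.
pose lx := fun i j : 'I_n => ole (x i) (x j).
pose ld := fun i j : 'I_n => d j <= d i.
pose ls := sort lx (enum 'I_n).
pose lu := sort ld (enum 'I_n).
have szs : size ls = n by rewrite size_sort size_enum_ord.
have szu : size lu = n by rewrite size_sort size_enum_ord.
have ins : forall j, j \in ls by move=> j; rewrite mem_sort mem_enum.
have idx : forall j, index j ls < n by move=> j; have := index_mem j ls; rewrite ins szs.
have uu : uniq lu by rewrite sort_uniq enum_uniq.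
pose f := fun j => nth j lu (index j ls).
have finj : injective f.
  move=> j1 j2; rewrite /f (set_nth_default j1 j2) ?szu ?idx //.
  move/eqP; rewrite nth_uniq ?szu ?idx // => /eqP.
  by move=> H; exact: (@index_inj _ j1 ls j1 j2 (ins j1) (ins j2) H).
exists (perm finj) => i j Hij; rewrite !permE /f.
have lx_tr : transitive lx by move=> b a c; apply: le_trans.
have lx_refl : reflexive lx by move=> a; apply: le_refl.
have lx_tot : total lx by move=> a b; apply: le_total.
have ld_tr : transitive ld by move=> b a c H1 H2; apply: leq_trans H2 H1.
have ld_refl : reflexive ld by move=> a; apply: leqnn.
have ld_tot : total ld by move=> a b; apply: leq_total.
have ab : index i ls <= index j ls.
  case: leqP => // ba; exfalso; move/negP: Hij; apply.
  have := sorted_leq_nth lx_tr lx_refl i (sort_sorted lx_tot (enum 'I_n)).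
  move=> /(_ (index j ls) (index i ls)); rewrite !inE szs !idx => /(_ isT isT (ltnW ba)).
  by rewrite /lx -/ls !nth_index ?ins.
have := sorted_leq_nth ld_tr ld_refl i (sort_sorted ld_tot (enum 'I_n)).
move=> /(_ (index i ls) (index j ls)); rewrite !inE szu !idx => /(_ isT isT ab).
by rewrite /ld (set_nth_default i j) ?szu ?idx.
Qed.

Lemma mon_le n (d : {ffun 'I_n -> nat}) x :
  ole (@meval Rmin_sr n (cc d) (ex x)) (@meval Rmin_sr n d x).
Proof.
rewrite mevalc (layer x (@Mb_ge n d)).
by apply: le_big => t _; apply: termB.
Qed.

Lemma mon_ge n (d : {ffun 'I_n -> nat}) x (s : {perm 'I_n}) :
  (forall i j, ~~ ole (x j) (x i) -> d (s j) <= d (s i)) ->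
  ole (@meval Rmin_sr n [ffun i => d (s i)] x) (@meval Rmin_sr n (cc d) (ex x)).
Proof.
move=> Hop.
rewrite mevalc (layer x (M := Mb d)); last by move=> j; rewrite ffunE Mb_ge.
apply: le_big => t _.
rewrite (eq_bigl (fun j => t < d (s j))); last by move=> j; rewrite ffunE.
exact: termC.
Qed.

Theorem fe_min : fully_elementary Rmin_sr.
Proof.
move=> n p sp.
exists [seq (t.1, cc t.2) | t <- p] => x.
change (@peval Rmin_sr n p x = @peval Rmin_sr n [seq (t.1, cc t.2) | t <- p] (ex x)).
rewrite /peval foldr_map.
apply: le_anti.
  apply: le_foldr_min => t Ht.
  have [s Hs] := opp_perm x t.2.
  have Ht' := sp t s Ht.
  apply: le_trans (foldr_min_le (fun t : option R * {ffun 'I_n -> nat} => ext_plus t.1 (@meval Rmin_sr n t.2 x)) Ht') _.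
  apply: le_plus; first exact: le_refl.
  exact: mon_ge.
apply: le_foldr_min => t Ht.
apply: le_trans (foldr_min_le (fun t : option R * {ffun 'I_n -> nat} => ext_plus t.1 (@meval Rmin_sr n (cc t.2) (ex x))) Ht) _.
apply: le_plus; first exact: le_refl.
exact: mon_le.
Qed.

Lemma fe_iso (X Y : srops) (f : X -> Y) (g : Y -> X)
  (fg : forall y, f (g y) = y)
  (fadd : forall a b, f (sadd a b) = sadd (f a) (f b))
  (fmul : forall a b, f (smul a b) = smul (f a) (f b))
  (f0 : f (szero X) = szero Y) (f1 : f (sone X) = sone Y)
  (gadd : forall a b, g (sadd a b) = sadd (g a) (g b))
  (gmul : forall a b, g (smul a b) = smul (g a) (g b))
  (g0 : g (szero Y) = szero X) (g1 : g (sone Y) = sone X) :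
  fully_elementary X -> fully_elementary Y.
Proof.
move=> FE n p sp.
have [r Hr] := FE n (hmap g p) (hmap_sym (h:=g) sp).
exists (hmap f r) => x.
rewrite -[LHS]fg h_peval // Hr h_peval //.
congr peval; apply: functional_extensionality => i.
rewrite h_peval // hmap_esym //; congr peval.
by apply: functional_extensionality => j.
Qed.

Lemma neg_min x y : negopt (rmin_add x y) = rmax_add (negopt x) (negopt y).
Proof.
case: x => [x|]; case: y => [y|] //=; rewrite /Rmax /Rmin.
by case: Rle_dec => ?; case: Rle_dec => ? //; congr Some; lra.
Qed.
Lemma negoptK x : negopt (negopt x) = x.
Proof. by case: x => [x|] //=; rewrite Ropp_involutive. Qed.

Lemma fe_max : fully_elementary Rmax_sr.
Proof.
apply: (@fe_iso Rmin_sr Rmax_sr negopt negopt negoptK) => //=.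
- exact: neg_min.
- exact: neg_plus.
- by rewrite Ropp_0.
- exact: neg_max.
- exact: neg_plus.
- by rewrite Ropp_0.
- exact: fe_min.
Qed.


Theorem theorem7p1 :
  fully_elementary Rmin_sr /\ fully_elementary Rmax_sr /\
  ~ fully_elementary (Stilde Rmin_sr) /\ ~ fully_elementary (Stilde Rmax_sr).
Proof.
split; first exact: fe_min.
split; first exact: fe_max.
split; [exact: not_fe_min | exact: not_fe_max].
Qed.
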